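(* Let $L \in R[x][\partial]$ have order $r>0$ and let $T$ be a desingularized operator for $L$. Write $\mathrm{lc}_\partial(T) = a g$ with $a \in R$ and $g \in R[x]$ primitive. If $k \in \mathbb{N}$ is such that $T \in M_k(L)$, then $$\mathrm{cont}(L) = \big(R[x][\partial]\cdot M_k(L)\big) : a^{\infty}.$$
   Context: $R$ is a principal ideal domain with quotient field $Q_R$. $\sigma$ is an $R$-automorphism of $R[x]$ with $\sigma(x)=\gamma x+\tau$ ($\gamma,\tau\in R$, $\gamma$ a unit), and $\delta$ is an $R$-linear $\sigma$-derivation of $R[x]$ (i.e. $\delta(fg)=\sigma(f)\delta(g)+\delta(f)g$) with $\delta(x)\in R[x]$ of degree at most $1$. $R[x][\partial]$ is the Ore algebra of polynomials in $\partial$ over $R[x]$ with multiplication determined by $\partial p=\sigma(p)\partial+\delta(p)$ for $p\in R[x]$; $\sigma,\delta$ extend to $Q_R(x)$, giving the Ore algebra $Q_R(x)[\partial]\supseteq R[x][\partial]$. For nonzero $L=\ell_r\partial^r+\dots+\ell_0$ with $\ell_i\in R[x]$, $\ell_r\neq 0$, the order is $\deg_\partial L=r$ and the leading coefficient is $\mathrm{lc}_\partial(L)=\ell_r$. A polynomial in $R[x]$ is primitive if the gcd of its coefficients is $1$; every nonzero $f\in R[x]$ is $cg$ with $c\in R$ (its content) and $g$ primitive. The contraction ideal is $\mathrm{cont}(L)=Q_R(x)[\partial]L\cap R[x][\partial]$, and $M_k(L)=\{P\in\mathrm{cont}(L): \deg_\partial P\le k\}$ (including $0$). For a left ideal $I$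 of $R[x][\partial]$ and $a\in R$, $I:a^\infty=\{P\in R[x][\partial]: a^iP\in I \text{ for some } i\in\mathbb{N}\}$; $R[x][\partial]\cdot S$ denotes the left ideal generated by $S$. Removability: for $L$ of positive order and $p\in R[x]$ dividing $\mathrm{lc}_\partial(L)$, $p$ is removable from $L$ at order $k$ if there are $P\in Q_R(x)[\partial]$ of order $k$ and $w,v\in R[x]$ with $\gcd(p,w)=1$ in $R[x]$ such that $PL\in R[x][\partial]$ and $\sigma^{-k}(\mathrm{lc}_\partial(PL))=\frac{w}{vp}\mathrm{lc}_\partial(L)$; $p$ is removable if removable at some order $k\in\mathbb{N}$, and non-removable otherwise. Desingularized operator: let $L$ have order $r>0$ and $\mathrm{lc}_\partial(L)=c\,p_1^{e_1}\cdots p_m^{e_m}$ with $c\in R$ and $p_1,\dots,p_m\in R[x]\setminus R$ irreducible and pairwise coprime. An operator $T\in R[x][\partial]$ of order $k$ is a desingularized operator for $L$ if $T\in\mathrm{cont}(L)$ and $\sigma^{r-k}(\mathrm{lc}_\partial(T))=\frac{a}{b\,p_1^{k_1}\cdots p_m^{k_m}}\mathrm{lc}_\partial(L)$ for some $a,b\in R$, $b\ne0$, and nonnegative integers $k_i$ such that $p_i^{d_i}$ is non-removable from $L$ for every integer $d_i>k_i$, $i=1,\dots,m$. *)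

(* Defs.v *)
From HB Require Import structures.
From mathcomp Require Import all_boot all_order all_algebra.
Set Implicit Arguments. Unset Strict Implicit. Unset Printing Implicit Defensive.
Import Order.TTheory GRing.Theory Num.Theory.
Local Open Scope ring_scope.

Definition dvdR (R : idomainType) (a b : R) : Prop := exists c : R, b = c * a.

Definition is_ideal (R : idomainType) (I : R -> Prop) : Prop :=
  [/\ I 0, (forall x y, I x -> I y -> I (x + y)) & (forall r x, I x -> I (r * x))].

Definition PID (R : idomainType) : Prop :=
  forall I : R -> Prop, is_ideal I -> exists g : R, forall x, I x <-> dvdR g x.

Definition primitive (R : idomainType) (g : {poly R}) : Prop :=
  forall c : R, (forall i, dvdR c g`_i) -> c \is a GRing.unit.

Definition dvdRX (R : idomainType) (a b : {poly R}) : Prop :=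
  exists c : {poly R}, b = c * a.
Definition coprimeRX (R : idomainType) (p w : {poly R}) : Prop :=
  forall c : {poly R}, dvdRX c p -> dvdRX c w -> c \is a GRing.unit.
Definition irredRX (R : idomainType) (p : {poly R}) : Prop :=
  [/\ p != 0, p \isn't a GRing.unit &
      forall f g : {poly R}, p = f * g -> f \is a GRing.unit \/ g \is a GRing.unit].

Definition QRx (R : idomainType) := {fraction {poly R}}.
Definition toK (R : idomainType) (p : {poly R}) : QRx R :=
  @FracField.tofrac {poly R} p.
Definition cK (R : idomainType) (c : R) : QRx R := toK c%:P.

(* Operators are polynomials in d; an element of Q_R(x)[d] is a
   {poly QRx R} (list of coefficients), an element of R[x][d] is a
   {poly {poly R}}.  [embed] is the inclusion R[x][d] -> Q_R(x)[d]. *)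
Definition embed (R : idomainType) (P : {poly {poly R}}) : {poly QRx R} :=
  map_poly (@toK R) P.

Definition inRX (R : idomainType) (f : QRx R) : Prop :=
  exists p : {poly R}, f = toK p.
Definition inRXop (R : idomainType) (Q : {poly QRx R}) : Prop :=
  forall i, inRX Q`_i.

Section Ore.
Variables (R : idomainType) (sig del : QRx R -> QRx R).
(* d * (sum_j q_j d^j) = sum_j (sig(q_j) d^(j+1) + del(q_j) d^j) *)
Definition dshift (Q : {poly QRx R}) : {poly QRx R} :=
  map_poly sig Q * 'X + map_poly del Q.
(* Ore product: (sum_i p_i d^i) * Q = sum_i p_i (d^i Q) *)
Definition omul (P Q : {poly QRx R}) : {poly QRx R} :=
  \sum_(i < size P) P`_i *: iter i dshift Q.
End Ore.

(* standing hypotheses on sigma, delta (as maps on Q_R(x), i.e. the unique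
   extensions of the given maps on R[x]) *)
Definition ore_data (R : idomainType) (gam tau : R) (d : {poly R})
  (sig sigi del : QRx R -> QRx R) : Prop :=
  [/\ gam \is a GRing.unit,
      [/\ sig 1 = 1, (forall f g, sig (f + g) = sig f + sig g),
          (forall f g, sig (f * g) = sig f * sig g),
          cancel sig sigi & cancel sigi sig],
      (forall c : R, sig (cK c) = cK c),
      sig (toK 'X) = toK (gam *: 'X + tau%:P) &
      [/\ (forall f g, del (f + g) = del f + del g),
          (forall (c : R) f, del (cK c * f) = cK c * del f),
          (forall f g, del (f * g) = sig f * del g + del f * g),
          del (toK 'X) = toK d & (size d <= 2)%N]].

Section Contraction.
Variables (R : idomainType) (sig sigi del : QRx R -> QRx R).
Local Notation omul := (omul sig del).

(* cont(L) = Q_R(x)[d] L  cap  R[x][d] *)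
Definition cont (L P : {poly {poly R}}) : Prop :=
  exists Q : {poly QRx R}, embed P = omul Q (embed L).

Definition Mk (L : {poly {poly R}}) (k : nat) (P : {poly {poly R}}) : Prop :=
  cont L P /\ (size P <= k.+1)%N.

Definition lideal (S : {poly {poly R}} -> Prop) (P : {poly {poly R}}) : Prop :=
  exists n (A B : 'I_n -> {poly {poly R}}),
    (forall i, S (B i)) /\ embed P = \sum_(i < n) omul (embed (A i)) (embed (B i)).

Definition colon (I : {poly {poly R}} -> Prop) (a : R) (P : {poly {poly R}}) : Prop :=
  exists i : nat, I ((a ^+ i)%:P *: P).

(* sigma^z for an integer exponent z = r - k, given as (r, k) *)
Definition sig_pow (r k : nat) (f : QRx R) : QRx R :=
  if (k <= r)%N then iter (r - k) sig f else iter (k - r) sigi f.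

Definition removable_at (L : {poly {poly R}}) (p : {poly R}) (k : nat) : Prop :=
  exists P : {poly QRx R}, size P = k.+1 /\
  exists w v : {poly R}, [/\ v != 0, coprimeRX p w,
    inRXop (omul P (embed L)) &
    iter k sigi (lead_coef (omul P (embed L)))
      = toK w / (toK v * toK p) * toK (lead_coef L)].

Definition removable (L : {poly {poly R}}) (p : {poly R}) : Prop :=
  exists k : nat, removable_at L p k.

Definition desingularized (L T : {poly {poly R}}) : Prop :=
  let r := (size L).-1 in let k := (size T).-1 in
  [/\ T != 0, cont L T &
  exists (c : R) (m : nat) (p : 'I_m -> {poly R}) (e : 'I_m -> nat),
    [/\ lead_coef L = c%:P * \prod_(i < m) p i ^+ e i,
        (forall i, (1 < size (p i))%N /\ irredRX (p i)),
        (forall i, 0 < e i)%N,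
        (forall i j, i != j -> coprimeRX (p i) (p j)) &
    exists (a b : R) (ks : 'I_m -> nat),
      [/\ b != 0,
          sig_pow r k (toK (lead_coef T))
            = cK a / (cK b * toK (\prod_(i < m) p i ^+ ks i)) * toK (lead_coef L) &
          forall i (dd : nat), (ks i < dd)%N -> ~ removable L (p i ^+ dd)]]].
End Contraction.

(* Main.v *)
Require Import Defs.
From HB Require Import structures.
From mathcomp Require Import all_boot all_order all_algebra ring zify.
From Stdlib Require Import ClassicalEpsilon Classical.
Set Implicit Arguments. Unset Strict Implicit. Unset Printing Implicit Defensive.
Import GRing.Theory.
Local Open Scope ring_scope.


Section PolyAlg.
Variable R : idomainType.
Implicit Types (x y c : R) (p q f h : {poly R}).

Lemma dvdR0 c : dvdR c 0. Proof. by exists 0; rewrite mul0r. Qed.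
Lemma dvdRD c x y : dvdR c x -> dvdR c y -> dvdR c (x + y).
Proof. by move=> [u ->] [v ->]; exists (u + v); rewrite mulrDl. Qed.
Lemma dvdRN c x : dvdR c x -> dvdR c (- x).
Proof. by move=> [u ->]; exists (- u); rewrite mulNr. Qed.
Lemma dvdRMl c x y : dvdR c x -> dvdR c (y * x).
Proof. by move=> [u ->]; exists (y * u); rewrite mulrA. Qed.
Lemma dvdR_sum c I (r : seq I) (P : pred I) (F : I -> R) :
  (forall i, P i -> dvdR c (F i)) -> dvdR c (\sum_(i <- r | P i) F i).
Proof.
move=> H; elim/big_rec: _ => [|i s Pi hs]; [exact: dvdR0 | exact: dvdRD (H i Pi) hs].
Qed.

Definition dvdC c p := forall i, dvdR c p`_i.

Lemma dvdC_factor c p : dvdC c p -> exists p', p = c%:P * p'.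
Proof.
move=> H.
have H' : forall i, exists u, p`_i = u * c by move=> i; exact: H.
pose f i := proj1_sig (constructive_indefinite_description _ (H' i)).
have Hf i : p`_i = f i * c by rewrite /f; case: constructive_indefinite_description.
exists (\poly_(i < size p) f i); apply/polyP => i.
rewrite coefCM coef_poly; case: ltnP => hi; first by rewrite Hf mulrC.
by rewrite mulr0 nth_default.
Qed.

Variable hPID : PID R.

Definition coef_ideal p (x : R) :=
  exists u : {poly R}, x = \sum_(i < size p) u`_i * p`_i.

Lemma coef_ideal_is p : is_ideal (coef_ideal p).
Proof.
split.
- by exists 0; rewrite big1 // => i _; rewrite coef0 mul0r.
- move=> x y [u ->] [v ->]; exists (u + v); rewrite -big_split.
  by apply: eq_bigr => i _; rewrite coefD mulrDl.
- move=> r x [u ->]; exists (r%:P * u); rewrite mulr_sumr.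
  by apply: eq_bigr => i _; rewrite coefCM mulrA.
Qed.

Lemma coef_ideal_coef p i : coef_ideal p p`_i.
Proof.
case: (ltnP i (size p)) => hi.
- exists 'X^i; rewrite (bigD1 (Ordinal hi)) //= coefXn eqxx mul1r big1 ?addr0 //.
  move=> j hj; rewrite coefXn; case: (eqVneq (val j) i) => [e|ne]; last by rewrite mul0r.
  by move: hj; rewrite (_ : j = Ordinal hi) ?eqxx //; apply: val_inj.
- by rewrite nth_default //; exists 0; rewrite big1 // => j _; rewrite coef0 mul0r.
Qed.

Lemma ideal_dvd p c x : dvdC c p -> coef_ideal p x -> dvdR c x.
Proof. by move=> H [u ->]; apply: dvdR_sum => i _; exact: dvdRMl. Qed.

Lemma primitive_bezout p : primitive p -> coef_ideal p 1.
Proof.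
move=> hp; have [g0 Hg] := hPID (coef_ideal_is p).
have hg0 : g0 \is a GRing.unit by apply: hp => i; apply/Hg/coef_ideal_coef.
by apply/Hg; exists (g0^-1); rewrite mulVr.
Qed.

Lemma content p : p != 0 -> exists c p', [/\ c != 0, p = c%:P * p' & primitive p'].
Proof.
move=> p0; have [g0 Hg] := hPID (coef_ideal_is p).
have hd : dvdC g0 p by move=> i; apply/Hg/coef_ideal_coef.
have [p' ep] := dvdC_factor hd.
have g00 : g0 != 0 by apply: contraNneq p0 => e; rewrite ep e polyC0 mul0r.
exists g0, p'; split => // c hc.
have : dvdR (g0 * c) g0.
  apply: (ideal_dvd (p:=p)); last by apply/Hg; exists 1; rewrite mul1r.
  by move=> i; rewrite ep coefCM; case: (hc i) => u ->; exists u; rewrite mulrCA.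
case=> e he; apply/unitrPr; exists e; apply: (mulfI g00).
by rewrite mulr1 {2}he; ring.
Qed.

Lemma mccoy G lam h : primitive G -> dvdC lam (G * h) -> dvdC lam h.
Proof.
move=> hG.
have [u hu] := primitive_bezout hG.
suff main : forall s h, (forall i, (s <= i)%N -> dvdR lam h`_i) ->
    dvdC lam (G * h) -> dvdC lam h.
  by move=> H; apply: (main (size h)) => // i hi; rewrite nth_default //; exact: dvdR0.
elim=> [|s IH] {}h hs hGh; first by move=> i; exact: hs.
have key : forall t i, (size G <= i + t)%N -> dvdC lam (G`_i *: h).
  elim=> [|t IHt] i hi.
    rewrite addn0 in hi; rewrite nth_default // scale0r => j; rewrite coef0; exact: dvdR0.
  case: (leqP (size G) (i + t)) => hit; first exact: IHt.
  have hj : forall j, (i < j)%N -> dvdC lam (G`_j *: h).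
    by move=> j ij; apply: IHt; lia.
  have his : dvdR lam (G`_i * h`_s).
    have c1 := hGh (i + s)%N; rewrite coefM in c1.
    have ilt : (i < (i + s).+1)%N by lia.
    rewrite (bigD1 (Ordinal ilt)) //= addKn in c1.
    set rest := (X in _ + X) in c1.
    have hr : dvdR lam rest.
      apply: dvdR_sum => j hj'.
      case: (ltngtP (nat_of_ord j) i) => ji.
      - apply: dvdRMl; apply: hs; lia.
      - by have := hj _ ji (i + s - j)%N; rewrite coefZ.
      - by move: hj'; rewrite (_ : j = Ordinal ilt) ?eqxx //; apply: val_inj.
    rewrite -(addrK rest (G`_i * h`_s)); apply: dvdRD => //; exact: dvdRN.
  apply: IH.
  - move=> j sj; rewrite coefZ; case: (eqVneq j s) => [->//|ne].
    apply: dvdRMl; apply: hs; lia.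
  - by move=> j; rewrite -scalerAr coefZ; apply: dvdRMl.
move=> m; rewrite -[h`_m]mul1r hu mulr_suml; apply: dvdR_sum => i _.
rewrite -mulrA; apply: dvdRMl.
by have := key (size G) i (leq_addl _ _) m; rewrite coefZ.
Qed.

Lemma gauss G lam f h : primitive G -> lam != 0 -> lam%:P * f = h * G -> dvdRX G f.
Proof.
move=> hG l0 e.
have : dvdC lam (G * h).
  by move=> i; rewrite mulrC -e coefCM; exists f`_i; rewrite mulrC.
move/(mccoy hG)/dvdC_factor => [h' eh]; exists h'.
apply: (mulfI (_ : lam%:P != 0)); first by rewrite polyC_eq0.
by rewrite e eh mulrA.
Qed.

Lemma unit_size1 p : p \is a GRing.unit -> size p = 1%N.
Proof. by rewrite poly_unitE => /andP[/eqP]. Qed.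

Lemma irred_primitive p : (1 < size p)%N -> irredRX p -> primitive p.
Proof.
move=> sp [p0 pu hirr] c hc.
have [p' ep] := dvdC_factor hc.
case: (hirr _ _ ep) => hu.
- by move: hu; rewrite poly_unitE coefC eqxx size_polyC => /andP[].
- exfalso; have s1 := unit_size1 hu.
  move: sp; rewrite ep mul_polyC => sp.
  by have := leq_trans sp (size_scale_leq c p'); rewrite s1.
Qed.

Definition primeRX p := forall f g, dvdRX p (f * g) -> dvdRX p f \/ dvdRX p g.

Lemma irred_prime p : (1 < size p)%N -> irredRX p -> primeRX p.
Proof.
move=> sp hp f g hfg.
have pp := irred_primitive sp hp.
have [p0 pu hirr] := hp.
case: (classic (dvdRX p f)) => hf; [by left | right].
pose M m := exists u v, m = u * p + v * f.
have f0 : f != 0 by apply: contra_notN hf => /eqP ->; exists 0; rewrite mul0r.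
suff [lam [l0 [u [v e]]]] : exists lam, lam != 0 /\ exists u v, lam%:P = u * p + v * f.
  have [w ew] := hfg.
  apply: (gauss (lam := lam) (h := u * g + v * w)) => //.
  rewrite e; have -> : (u * p + v * f) * g = u * g * p + v * (f * g) by ring.
  by rewrite ew; ring.
have main : forall s (m : {poly R}), (size m <= s)%N -> m != 0 -> M m ->
    exists lam, lam != 0 /\ exists u v, lam%:P = u * p + v * f.
  elim=> [|s IH] m sm m0 Mm; first by move: sm; rewrite leqn0 size_poly_eq0 (negPf m0).
  have step : forall (y : {poly R}), M y -> (exists lam, lam != 0 /\ exists u v, lam%:P = u * p + v * f)
      \/ exists k q, (lead_coef m ^+ k)%:P * y = q * m.
    move=> y My; have e := Pdiv.Idomain.divp_eq y m.
    case: (eqVneq (y %% m) 0) => r0.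
    - by right; exists (scalp y m), (y %/ m); rewrite mul_polyC e r0 addr0.
    - left; apply: (IH (y %% m)) => //.
        by move: (Pdiv.Idomain.ltn_modp y m); rewrite m0 => h; rewrite -ltnS; exact: (leq_trans h sm).
      have -> : y %% m = (lead_coef m ^+ scalp y m)%:P * y - y %/ m * m.
        by rewrite mul_polyC e addrC addKr.
      set q := y %/ m; set cc := (lead_coef m ^+ scalp y m)%:P.
      case: My => [u1 [v1 Ey]]; case: Mm => [u2 [v2 Em]].
      by exists (cc * u1 - q * u2), (cc * v1 - q * v2); rewrite Ey Em; ring.
  have lm0 : forall k, lead_coef m ^+ k != 0 by move=> k; rewrite expf_neq0 // lead_coef_eq0.
  have Mp : M p by exists 1, 0; rewrite mul1r mul0r addr0.
  have Mf : M f by exists 0, 1; rewrite mul0r mul1r add0r.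
  case: (step p Mp) => [//|[k1 [q1 e1]]].
  case: (step f Mf) => [//|[k2 [q2 e2]]].
  have [c [m'' [c0 em pm]]] := content m0.
  have [e ee] : dvdRX m'' p.
    by apply: (gauss pm (lm0 k1) (h := q1 * c%:P)); rewrite e1 em mulrA.
  case: (hirr _ _ ee) => hu.
  - exfalso; apply: hf.
    have [t et] : dvdRX m'' f.
      by apply: (gauss pm (lm0 k2) (h := q2 * c%:P)); rewrite e2 em mulrA.
    exists (t * e^-1); rewrite et ee mulrA -(mulrA t) mulVr ?mulr1 //.
  - have s1 := unit_size1 hu.
    have em2 : m = (c * m''`_0)%:P by rewrite em {1}(size1_polyC (eq_leq s1)) polyCM.
    exists (c * m''`_0); split.
      by apply: contraNneq m0 => ce; rewrite em2 ce polyC0.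
    by rewrite -em2.
apply: (main (size f) f) => //; by exists 0, 1; rewrite mul0r mul1r add0r.
Qed.

Lemma val_exists p h : (1 < size p)%N -> h != 0 ->
  exists a h', h = p ^+ a * h' /\ ~ dvdRX p h'.
Proof.
move=> sp; move: {2}(size h) (leqnn (size h)) => s; elim: s h => [|s IH] h sh h0.
  by move: sh; rewrite leqn0 size_poly_eq0 (negPf h0).
case: (classic (dvdRX p h)) => [[c ec]|nd]; last by exists 0%N, h; rewrite expr0 mul1r.
have c0 : c != 0 by apply: contraNneq h0 => e; rewrite ec e mul0r.
have p0 : p != 0 by rewrite -size_poly_gt0; lia.
have sc : (size c <= s)%N by move: sh; rewrite ec size_mul //; lia.
have [a [h' [ea nh]]] := IH c sc c0.
by exists a.+1, h'; split => //; rewrite ec ea exprS; ring.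
Qed.

Lemma prime_pow_dvd p e (x y : {poly R}) : p != 0 -> primeRX p -> ~ dvdRX p y ->
  dvdRX (p ^+ e) (x * y) -> dvdRX (p ^+ e) x.
Proof.
move=> p0 pp ny; elim: e x => [|e IH] x hxy; first by exists x; rewrite expr0 mulr1.
have [x1 ex] : dvdRX (p ^+ e) x.
  by apply: IH; case: hxy => t et; exists (t * p); rewrite et exprSr; ring.
case: hxy => t et.
have : x1 * y = t * p.
  apply: (mulIf (expf_neq0 e p0)); rewrite -mulrA (mulrC y) mulrA -ex et exprSr; ring.
move=> e2; case: (pp x1 y) => [|[x2 ex2]|//]; first by exists t.
by exists x2; rewrite ex ex2 exprSr; ring.
Qed.

Lemma not_dvd_one p : (1 < size p)%N -> ~ dvdRX p 1.
Proof.
move=> sp [c ec]; have : p \is a GRing.unit by apply/unitrPr; exists c; rewrite mulrC.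
by move/unit_size1 => s1; rewrite s1 in sp.
Qed.

Lemma dvd_prime_pow p (c : {poly R}) dd : primeRX p -> p != 0 -> dvdRX c (p ^+ dd) ->
  c \is a GRing.unit \/ dvdRX p c.
Proof.
move=> pp p0; elim: dd c => [|dd IH] c [e he].
- left; rewrite expr0 in he; apply/unitrPr; exists e; by rewrite mulrC -he.
- case: (pp e c).
  + by exists (p ^+ dd); rewrite -he exprSr.
  + case=> e' ee; apply: IH; exists e'; apply: (mulIf p0).
    by rewrite -exprSr he ee; ring.
  + by right.
Qed.

Lemma dvdRX_trans (a b c : {poly R}) : dvdRX a b -> dvdRX b c -> dvdRX a c.
Proof. by move=> [u ->] [v ->]; exists (v * u); rewrite mulrA. Qed.

Lemma coprime_pow p dd N : primeRX p -> p != 0 -> ~ dvdRX p N -> coprimeRX (p ^+ dd) N.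
Proof.
move=> pp p0 nN c h1 h2; case: (dvd_prime_pow pp p0 h1) => // h3.
by exfalso; apply: nN; exact: dvdRX_trans h3 h2.
Qed.

Lemma dvdRX_refl p : dvdRX p p. Proof. by exists 1; rewrite mul1r. Qed.

Lemma prime_not_dvd_pow p q e : primeRX p -> (1 < size p)%N -> coprimeRX p q ->
  ~ dvdRX p (q ^+ e).
Proof.
move=> pp sp cpq; elim: e => [|e IH]; first by rewrite expr0; exact: not_dvd_one.
rewrite exprS => /pp [h|//].
have := cpq p (dvdRX_refl p) h; move/unit_size1 => s1; by rewrite s1 in sp.
Qed.

Lemma dvd_prod_pows m (P : 'I_m -> {poly R}) (E : 'I_m -> nat) f :
  (forall i, primeRX (P i)) -> (forall i, (1 < size (P i))%N) ->
  (forall i j, i != j -> coprimeRX (P i) (P j)) ->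
  (forall i, dvdRX (P i ^+ E i) f) -> dvdRX (\prod_(i < m) P i ^+ E i) f.
Proof.
move=> hp hs hc hd.
have nd : forall j (s : seq 'I_m), j \notin s -> ~ dvdRX (P j) (\prod_(i <- s) P i ^+ E i).
  move=> j; elim=> [|i s IH]; first by rewrite big_nil => _; exact: not_dvd_one.
  rewrite inE negb_or => /andP[ji js]; rewrite big_cons => /hp [h|]; last exact: IH.
  by apply: (prime_not_dvd_pow (hp j) (hs j) (hc _ _ ji)) h.
suff : forall s : seq 'I_m, uniq s -> dvdRX (\prod_(i <- s) P i ^+ E i) f.
  by move/(_ _ (index_enum_uniq _)).
elim=> [|j s IH]; first by rewrite big_nil => _; exists f; rewrite mulr1.
move=> /= /andP[js us]; have [h eh] := IH us.
have pj0 : P j != 0 by rewrite -size_poly_gt0; have := hs j; lia.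
have [h' eh'] : dvdRX (P j ^+ E j) h.
  apply: (prime_pow_dvd pj0 (hp j) (nd _ _ js)); by rewrite -eh.
by exists h'; rewrite big_cons eh eh' mulrA.
Qed.

End PolyAlg.


Definition oreH (R : idomainType) (sig del : QRx R -> QRx R) :=
  [/\ (forall f g, sig (f + g) = sig f + sig g),
      (forall f g, sig (f * g) = sig f * sig g),
      sig 1 = 1,
      (forall f, sig f = 0 -> f = 0) &
      (forall f g, del (f + g) = del f + del g) /\
      (forall f g, del (f * g) = sig f * del g + del f * g)].

Section Ore.
Variables (R : idomainType) (sig del : QRx R -> QRx R).
Hypothesis hO : oreH sig del.
Let sigD : forall f g, sig (f + g) = sig f + sig g. Proof. by case: hO. Qed.
Let sigM : forall f g, sig (f * g) = sig f * sig g. Proof. by case: hO. Qed.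
Let sig1 : sig 1 = 1. Proof. by case: hO. Qed.
Let sig_inj0 : forall f, sig f = 0 -> f = 0. Proof. by case: hO. Qed.
Let delD : forall f g, del (f + g) = del f + del g. Proof. by case: hO => _ _ _ _ []. Qed.
Let delM : forall f g, del (f * g) = sig f * del g + del f * g. Proof. by case: hO => _ _ _ _ []. Qed.
Local Notation K := (QRx R).
Local Notation D := (dshift sig del).
Local Notation om := (omul sig del).
Implicit Types (Q Y Z : {poly K}) (c : K).

Lemma sig0 : sig 0 = 0.
Proof. by apply: (addrI (sig 0)); rewrite -sigD !addr0. Qed.
Lemma del0 : del 0 = 0.
Proof. by apply: (addrI (del 0)); rewrite -delD !addr0. Qed.
Lemma del1 : del 1 = 0.
Proof.
have h := delM 1 1; rewrite sig1 !mul1r mulr1 in h.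
by apply: (addrI (del 1)); rewrite addr0 -h.
Qed.

Lemma coefDs j Y : (D Y)`_j = (if j == 0%N then 0 else sig Y`_j.-1) + del Y`_j.
Proof.
rewrite /dshift coefD coefMX (coef_map_id0 _ _ del0); case: (j == 0%N) => //.
by rewrite coef_map_id0 ?sig0.
Qed.

Lemma DD Y Z : D (Y + Z) = D Y + D Z.
Proof.
apply/polyP => j; rewrite coefD !coefDs !coefD delD; case: (j == 0%N); rewrite ?sigD; ring.
Qed.

Lemma D0 : D 0 = 0.
Proof. by apply/polyP => j; rewrite coefDs !coef0 sig0 del0; case: (j == 0%N); rewrite ?addr0. Qed.

Lemma DZ c Y : D (c *: Y) = sig c *: D Y + del c *: Y.
Proof.
apply/polyP => j; rewrite coefDs coefD (coefZ (sig c)) (coefZ (del c)) coefDs !(coefZ c) delM; case: (j == 0%N); rewrite ?sigM; ring.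
Qed.

Lemma D_sum I (r : seq I) (P : pred I) (F : I -> {poly K}) :
  D (\sum_(i <- r | P i) F i) = \sum_(i <- r | P i) D (F i).
Proof. exact: (big_morph _ DD D0). Qed.

Lemma omulE Q Y N : (size Q <= N)%N -> om Q Y = \sum_(i < N) Q`_i *: iter i D Y.
Proof.
move=> hN; rewrite /omul (big_ord_widen N (fun i => Q`_i *: iter i D Y)) //.
rewrite big_mkcond; apply: eq_bigr => i _; case: ltnP => // h.
by rewrite nth_default // scale0r.
Qed.

Lemma omulD Q1 Q2 Y : om (Q1 + Q2) Y = om Q1 Y + om Q2 Y.
Proof.
set N := maxn (size Q1) (size Q2).
rewrite !(omulE _ (N := N)) ?leq_maxl ?leq_maxr ?(leq_trans (size_add _ _)) //.
by rewrite -big_split; apply: eq_bigr => i _; rewrite coefD scalerDl.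
Qed.

Lemma omulZ c Q Y : om (c *: Q) Y = c *: om Q Y.
Proof.
rewrite !(omulE _ (N := size Q)) ?size_scale_leq // scaler_sumr.
by apply: eq_bigr => i _; rewrite coefZ scalerA.
Qed.

Lemma omul0 Y : om 0 Y = 0.
Proof. by rewrite /omul size_poly0 big_ord0. Qed.

Lemma omulN Q Y : om (- Q) Y = - om Q Y.
Proof. by rewrite -scaleN1r omulZ scaleN1r. Qed.

Lemma omulB Q1 Q2 Y : om (Q1 - Q2) Y = om Q1 Y - om Q2 Y.
Proof. by rewrite omulD omulN. Qed.

Lemma omul_sum I (r : seq I) (P : pred I) (F : I -> {poly K}) Y :
  om (\sum_(i <- r | P i) F i) Y = \sum_(i <- r | P i) om (F i) Y.
Proof. exact: (big_morph (fun Q => om Q Y) (fun a b => omulD a b Y) (omul0 Y)). Qed.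

Lemma omulC c Y : om c%:P Y = c *: Y.
Proof. by rewrite (omulE _ (N := 1)) ?size_polyC ?leq_b1 // big_ord1 coefC. Qed.

Lemma omul1 Y : om 1 Y = Y.
Proof. by rewrite -polyC1 omulC scale1r. Qed.

Lemma omulXn j Y : om 'X^j Y = iter j D Y.
Proof.
rewrite (omulE _ (N := j.+1)) ?size_polyXn // big_ord_recr /= coefXn eqxx scale1r.
rewrite big1 ?add0r // => i _; rewrite coefXn (_ : (i == j :> nat) = false) ?scale0r //.
by apply/negbTE; rewrite neq_ltn ltn_ord.
Qed.

Lemma omulMX Q Y : om (Q * 'X) Y = om Q (D Y).
Proof.
have hs : (size (Q * 'X)%R <= (size Q).+1)%N.
  by apply/leq_sizeP => -[|j] hj; rewrite coefMX //= nth_default.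
rewrite (omulE Y hs) (omulE (D Y) (leqnn _)) big_ord_recl /= coefMX eqxx scale0r add0r.
by apply: eq_bigr => i _; rewrite coefMX /= add0n -iterSr.
Qed.

Lemma D1 : D 1 = 'X.
Proof.
apply/polyP => j; rewrite coefDs coefX !coef1; case: j => [|[|j]] /=; rewrite ?mulr1n ?mulr0n.
- by rewrite del1 addr0.
- by rewrite sig1 del0 addr0.
- by rewrite sig0 del0 addr0.
Qed.

Lemma DMX Y : D (Y * 'X) = D Y * 'X.
Proof.
apply/polyP => j; rewrite coefMX !coefDs !coefMX; case: j => [|[|j]] /=.
- by rewrite del0 addr0.
- by rewrite sig0 add0r.
- by [].
Qed.

Lemma omul_step Q c Y : om (Q * 'X + c%:P) Y = om Q (D Y) + c *: Y.
Proof. by rewrite omulD omulMX omulC. Qed.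

Lemma omulX Y : om 'X Y = D Y.
Proof. by have := omulXn 1 Y; rewrite expr1. Qed.

Lemma D_omul B C : D (om B C) = om (D B) C.
Proof.
elim/poly_ind: B C => [|B c IH] C; first by rewrite omul0 D0 omul0.
rewrite omul_step DD IH DZ DD DMX omulD omulMX.
have -> : D c%:P = sig c *: 'X + del c *: 1 by rewrite -alg_polyC DZ D1.
by rewrite (omulD (sig c *: 'X)) !omulZ omulX omul1.
Qed.

Lemma omulA A B C : om A (om B C) = om (om A B) C.
Proof.
elim/poly_ind: A B => [|A c IH] B; first by rewrite !omul0.
by rewrite !omul_step D_omul IH omulD omulZ.
Qed.

Lemma size_lead_char (p : {poly K}) n : p`_n != 0 -> (forall j, (n < j)%N -> p`_j = 0) ->
  size p = n.+1 /\ lead_coef p = p`_n.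
Proof.
move=> pn hj.
have h1 : (size p <= n.+1)%N by apply/leq_sizeP.
have h2 : (n < size p)%N.
  by rewrite ltnNge; apply: contra pn => /leq_sizeP/(_ n (leqnn n)) ->.
have e : size p = n.+1 by apply/eqP; rewrite eqn_leq h1 h2.
by split => //; rewrite lead_coefE e.
Qed.

Lemma size_D Y : Y != 0 -> size (D Y) = (size Y).+1 /\ lead_coef (D Y) = sig (lead_coef Y).
Proof.
move=> Y0; have sY : size Y != 0%N by rewrite size_poly_eq0.
have := size_lead_char (p := D Y) (n := size Y).
rewrite coefDs (negPf sY) (nth_default _ (leqnn _)) del0 addr0 -lead_coefE; apply.
- by apply: contra Y0 => /eqP /sig_inj0 /eqP; rewrite lead_coef_eq0.
- case=> [//|j] hj; rewrite coefDs /= (nth_default _ hj) (nth_default _ (leqW hj)).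
  by rewrite sig0 del0 addr0.
Qed.

Lemma size_iterD i Y : Y != 0 -> [/\ iter i D Y != 0, size (iter i D Y) = (size Y + i)%N
  & lead_coef (iter i D Y) = iter i sig (lead_coef Y)].
Proof.
move=> Y0; elim: i => [|i [h0 hs hl]]; first by rewrite addn0.
rewrite !iterS; have [s1 l1] := size_D h0.
split; last by rewrite l1 hl.
- by rewrite -size_poly_eq0 s1.
- by rewrite s1 hs addnS.
Qed.

Lemma iter_sig_neq0 i f : f != 0 -> iter i sig f != 0.
Proof.
move=> f0; elim: i => [|i IH]; first exact: f0.
rewrite iterS; apply: contra IH => /eqP /sig_inj0 ->; exact: eqxx.
Qed.

Lemma size_omul Q Y : Q != 0 -> Y != 0 ->
  size (om Q Y) = (size Q + size Y).-1 /\
  lead_coef (om Q Y) = lead_coef Q * iter (size Q).-1 sig (lead_coef Y).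
Proof.
move=> Q0 Y0.
set n0 := (size Q).-1.
have sQ : size Q = n0.+1 by rewrite /n0 prednK // size_poly_gt0.
have sY : (0 < size Y)%N by rewrite size_poly_gt0.
rewrite (omulE Y (_ : size Q <= n0.+1)%N) ?sQ // big_ord_recr /=.
have [h0 hs hl] := size_iterD n0 Y0.
set S := \sum_(i < n0) _.
have hS : forall j, ((size Y).-1 + n0 <= j)%N -> S`_j = 0.
  move=> j hj; rewrite coef_sum big1 // => i _; rewrite coefZ.
  have [_ hsi _] := size_iterD i Y0.
  have hij : (size (iter i D Y) <= j)%N by rewrite hsi; have := ltn_ord i; lia.
  by rewrite (nth_default _ hij) mulr0.
have e : ((size Y).-1 + n0 = (size (iter n0 D Y)).-1)%N by rewrite hs; lia.
have := size_lead_char (p := S + Q`_n0 *: iter n0 D Y) (n := ((size Y).-1 + n0)%N).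
have hc : (iter n0 D Y)`_((size Y).-1 + n0) = iter n0 sig (lead_coef Y).
  by rewrite e -lead_coefE hl.
rewrite coefD (hS _ (leqnn _)) add0r coefZ hc.
have lQ : lead_coef Q = Q`_n0 by rewrite lead_coefE sQ.
case.
- apply: mulf_neq0; first by rewrite -lQ lead_coef_eq0.
  apply: iter_sig_neq0; by rewrite lead_coef_eq0.
- move=> j hj; rewrite coefD hS ?add0r; last by lia.
  have hij : (size (iter n0 D Y) <= j)%N by rewrite hs; lia.
  by rewrite coefZ (nth_default _ hij) mulr0.
- move=> -> ->; split; last by rewrite lQ.
  by move: sY; case: (size Y) => [//|s] _; rewrite /= addnS addnC.
Qed.

End Ore.


Section ToK.
Variable R : idomainType.
Local Notation K := (QRx R).

Lemma toKD (p q : {poly R}) : toK (p + q) = toK p + toK q.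
Proof. exact: rmorphD. Qed.
Lemma toKM (p q : {poly R}) : toK (p * q) = toK p * toK q.
Proof. exact: rmorphM. Qed.
Lemma toKN (p : {poly R}) : toK (- p) = - toK p.
Proof. exact: rmorphN. Qed.
Lemma toKB (p q : {poly R}) : toK (p - q) = toK p - toK q.
Proof. exact: rmorphB. Qed.
Lemma toK0 : toK (0 : {poly R}) = 0.
Proof. exact: rmorph0. Qed.
Lemma toK1 : toK (1 : {poly R}) = 1.
Proof. exact: rmorph1. Qed.
Lemma toKX (p : {poly R}) n : toK (p ^+ n) = toK p ^+ n.
Proof. exact: rmorphXn. Qed.
Lemma toK_inj : injective (@toK R).
Proof. by move=> p q /eqP; rewrite /toK tofrac_eq => /eqP. Qed.
Lemma toK_eq0 (p : {poly R}) : (toK p == 0) = (p == 0).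
Proof. by rewrite /toK tofrac_eq0. Qed.
Lemma toK_prod I (r : seq I) (P : pred I) (F : I -> {poly R}) :
  toK (\prod_(i <- r | P i) F i) = \prod_(i <- r | P i) toK (F i).
Proof. exact: rmorph_prod. Qed.
Lemma cKM (x y : R) : cK (x * y) = cK x * cK y.
Proof. by rewrite /cK polyCM toKM. Qed.

Lemma fracE (x : K) : exists n d : {poly R}, d != 0 /\ x = toK n / toK d.
Proof.
elim/quotW: x => r.
exists r.1, r.2; split; first exact: denom_ratioP.
rewrite /toK; unlock FracField.tofrac.
rewrite !piE.
apply/eqmodP => /=.
rewrite FracField.equivfE /FracField.mulf /FracField.invf /=.
have hd := denom_ratioP r.
rewrite !numden_Ratio ?oner_neq0 ?mulr1 ?mul1r //.
by rewrite mulrC.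
Qed.

Lemma inRX0 : inRX (0 : K). Proof. by exists 0; rewrite toK0. Qed.
Lemma inRX1 : inRX (1 : K). Proof. by exists 1; rewrite toK1. Qed.
Lemma inRXD (x y : K) : inRX x -> inRX y -> inRX (x + y).
Proof. by move=> [p ->] [q ->]; exists (p + q); rewrite toKD. Qed.
Lemma inRXM (x y : K) : inRX x -> inRX y -> inRX (x * y).
Proof. by move=> [p ->] [q ->]; exists (p * q); rewrite toKM. Qed.
Lemma inRXN (x : K) : inRX x -> inRX (- x).
Proof. by move=> [p ->]; exists (- p); rewrite toKN. Qed.
Lemma inRXtoK (p : {poly R}) : inRX (toK p). Proof. by exists p. Qed.

Definition homK (phi : K -> K) :=
  [/\ forall f g, phi (f + g) = phi f + phi g, forall f g, phi (f * g) = phi f * phi g,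
      forall c, phi (cK c) = cK c & forall p, inRX (phi (toK p))].

Lemma homK_build (phi : K -> K) :
  (forall f g, phi (f + g) = phi f + phi g) -> (forall f g, phi (f * g) = phi f * phi g) ->
  (forall c, phi (cK c) = cK c) -> inRX (phi (toK 'X)) -> homK phi.
Proof.
move=> hD hM hC hX; split => // p; elim/poly_ind: p => [|p c IH].
  by have := hC 0; rewrite /cK polyC0 => ->; exact: inRXtoK.
rewrite toKD toKM hD hM hC; apply: inRXD; last exact: inRXtoK.
exact: inRXM.
Qed.

Lemma homK_iter phi n : homK phi -> homK (iter n phi).
Proof.
move=> [hD hM hC hP]; elim: n => [|n [iD iM iC iP]] /=; first by split => // p; exact: inRXtoK.
split => /=.
- by move=> f g; rewrite iD hD.
- by move=> f g; rewrite iM hM.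
- by move=> c; rewrite iC hC.
- by move=> p; have [q ->] := iP p; exact: hP.
Qed.

Lemma homK0 phi : homK phi -> phi 0 = 0.
Proof. by case=> hD _ _ _; apply: (addrI (phi 0)); rewrite -hD !addr0. Qed.
Lemma homK1 phi : homK phi -> phi 1 = 1.
Proof. by case=> _ _ hC _; have := hC 1; rewrite /cK polyC1 toK1. Qed.
Lemma homKN phi x : homK phi -> phi (- x) = - phi x.
Proof.
move=> h; apply: (addrI (phi x)); rewrite subrr; have [hD _ _ _] := h.
by rewrite -hD subrr homK0.
Qed.

Lemma homK_pol phi p : homK phi -> exists q, phi (toK p) = toK q.
Proof. by case=> _ _ _ hP; exact: hP. Qed.

Lemma coef_embed (P : {poly {poly R}}) i : (embed P)`_i = toK P`_i.
Proof. by rewrite /embed coef_map_id0 // toK0. Qed.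

Lemma embedD (P1 P2 : {poly {poly R}}) : embed (P1 + P2) = embed P1 + embed P2.
Proof. by apply/polyP => i; rewrite coefD !coef_embed coefD toKD. Qed.
Lemma embedN (P : {poly {poly R}}) : embed (- P) = - embed P.
Proof. by apply/polyP => i; rewrite coefN !coef_embed coefN toKN. Qed.
Lemma embedB (P1 P2 : {poly {poly R}}) : embed (P1 - P2) = embed P1 - embed P2.
Proof. by rewrite embedD embedN. Qed.
Lemma embedZ (x : {poly R}) (P : {poly {poly R}}) : embed (x *: P) = toK x *: embed P.
Proof. by apply/polyP => i; rewrite coefZ !coef_embed coefZ toKM. Qed.
Lemma embed1 : embed (1 : {poly {poly R}}) = 1.
Proof. by apply/polyP => i; rewrite coef_embed !coef1; case: (i == 0%N); rewrite ?toK0 ?toK1. Qed.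
Lemma embed_CXn (x : {poly R}) j : embed (x%:P * 'X^j) = toK x *: 'X^j.
Proof.
apply/polyP => i; rewrite coef_embed coefCM coefZ !coefXn; case: (i == j).
  by rewrite !mulr1.
by rewrite !mulr0 toK0.
Qed.
Lemma embed_inj : injective (@embed R).
Proof. by move=> P1 P2 e; apply/polyP => i; apply: toK_inj; rewrite -!coef_embed e. Qed.
Lemma size_embed (P : {poly {poly R}}) : size (embed P) = size P.
Proof. by apply: size_map_inj_poly; [exact: toK_inj | exact: toK0]. Qed.
Lemma lead_embed (P : {poly {poly R}}) : lead_coef (embed P) = toK (lead_coef P).
Proof. by apply: lead_coef_map_inj; [exact: toK_inj | exact: toK0]. Qed.
Lemma embed_eq0 (P : {poly {poly R}}) : (embed P == 0) = (P == 0).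
Proof. by rewrite -!size_poly_eq0 size_embed. Qed.

Lemma inRXop_embed (P : {poly {poly R}}) : inRXop (embed P).
Proof. by move=> i; rewrite coef_embed; exact: inRXtoK. Qed.

Lemma unembed (Y : {poly K}) : inRXop Y -> exists P, embed P = Y.
Proof.
move=> H.
pose f i := proj1_sig (constructive_indefinite_description _ (H i)).
have Hf i : Y`_i = toK (f i) by rewrite /f; case: constructive_indefinite_description.
exists (\poly_(i < size Y) f i); apply/polyP => i.
rewrite coef_embed coef_poly; case: ltnP => hi; first by rewrite Hf.
by rewrite toK0 nth_default.
Qed.

End ToK.


Lemma frac_cancel (F : fieldType) (x y z w : F) n k : x != 0 ->
  x ^+ n * y / (x ^+ n * x ^+ k * z) * w = y / (z * x ^+ k) * w.
Proof.
move=> x0; have xb : x ^+ n != 0 by exact: expf_neq0.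
rewrite (_ : x ^+ n * x ^+ k * z = x ^+ n * (z * x ^+ k)); last first.
  by rewrite -mulrA (mulrC (x ^+ k)).
by rewrite invfM mulrACA mulfV // mul1r.
Qed.

Lemma frac2 (F : fieldType) (y z w : F) : z != 0 -> y / z * w * z = y * w.
Proof. by move=> z0; rewrite mulrAC divfK. Qed.

Lemma frac3 (F : fieldType) (u v s w : F) : s != 0 -> u = v / s * w -> u * s = v * w.
Proof. by move=> s0 ->; exact: frac2. Qed.

Section Lideal.
Variables (R : idomainType) (sig del : QRx R -> QRx R).
Variable S : {poly {poly R}} -> Prop.

Lemma lideal_single A B P : S B -> embed P = omul sig del (embed A) (embed B) ->
  lideal sig del S P.
Proof.
move=> hB e; exists 1%N, (fun _ => A), (fun _ => B); split => //.
by rewrite big_ord1.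
Qed.

Lemma lideal_add P1 P2 : lideal sig del S P1 -> lideal sig del S P2 ->
  lideal sig del S (P1 + P2).
Proof.
move=> [n1 [A1 [B1 [hB1 e1]]]] [n2 [A2 [B2 [hB2 e2]]]].
pose A i := match split i with inl j => A1 j | inr j => A2 j end.
pose B i := match split i with inl j => B1 j | inr j => B2 j end.
have sl : forall i : 'I_n1, split (lshift n2 i) = inl i := fun i => unsplitK (inl i).
have sr : forall i : 'I_n2, split (rshift n1 i) = inr i := fun i => unsplitK (inr i).
exists (n1 + n2)%N, A, B; split.
  by move=> i; rewrite /B; case: (split i).
rewrite embedD e1 e2 big_split_ord /=; congr (_ + _); apply: eq_bigr => i _.
  by rewrite /A /B sl.
by rewrite /A /B sr.
Qed.

Lemma lideal_scale x P : lideal sig del S P -> lideal sig del S (x *: P).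
Proof.
move=> [n [A [B [hB e]]]]; exists n, (fun i => x *: A i), B; split => //.
rewrite embedZ e scaler_sumr; apply: eq_bigr => i _.
by rewrite embedZ omulZ.
Qed.
End Lideal.

Section Main.
Variable R : idomainType.
Hypothesis hPID : PID R.
Variables (gam tau : R) (d : {poly R}) (sig sigi del : QRx R -> QRx R).
Hypothesis hore : ore_data gam tau d sig sigi del.
Local Notation K := (QRx R).
Local Notation D := (dshift sig del).
Local Notation om := (omul sig del).

Let gamU : gam \is a GRing.unit. Proof. by case: hore. Qed.
Let sig1 : sig 1 = 1. Proof. by case: hore => _ [h1 h2 h3 h4 h5] _ _ _. Qed.
Let sigD : forall f g, sig (f + g) = sig f + sig g.
Proof. by case: hore => _ [h1 h2 h3 h4 h5] _ _ _. Qed.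
Let sigM : forall f g, sig (f * g) = sig f * sig g.
Proof. by case: hore => _ [h1 h2 h3 h4 h5] _ _ _. Qed.
Let sigK : cancel sig sigi. Proof. by case: hore => _ [h1 h2 h3 h4 h5] _ _ _. Qed.
Let sigiK : cancel sigi sig. Proof. by case: hore => _ [h1 h2 h3 h4 h5] _ _ _. Qed.
Let sigC : forall c, sig (cK c) = cK c. Proof. by case: hore. Qed.
Let sigX : sig (toK 'X) = toK (gam *: 'X + tau%:P). Proof. by case: hore. Qed.
Let delD : forall f g, del (f + g) = del f + del g.
Proof. by case: hore => _ _ _ _ [h1 h2 h3 h4 h5]. Qed.
Let delC : forall (c : R) f, del (cK c * f) = cK c * del f.
Proof. by case: hore => _ _ _ _ [h1 h2 h3 h4 h5]. Qed.
Let delM : forall f g, del (f * g) = sig f * del g + del f * g.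
Proof. by case: hore => _ _ _ _ [h1 h2 h3 h4 h5]. Qed.
Let delX : del (toK 'X) = toK d.
Proof. by case: hore => _ _ _ _ [h1 h2 h3 h4 h5]. Qed.

Let sig0 : sig 0 = 0.
Proof. by apply: (addrI (sig 0)); rewrite -sigD !addr0. Qed.
Let sig_inj0 : forall f, sig f = 0 -> f = 0.
Proof. by move=> f h; rewrite -(sigK f) h -{1}sig0 sigK. Qed.

Let hO : oreH sig del.
Proof. split; [exact: sigD | exact: sigM | exact: sig1 | exact: sig_inj0 | by split]. Qed.

Let hom_sig : homK sig.
Proof. apply: (homK_build sigD sigM sigC); rewrite sigX; exact: inRXtoK. Qed.

Let sigiD f g : sigi (f + g) = sigi f + sigi g.
Proof. by apply: (can_inj sigK); rewrite sigD !sigiK. Qed.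
Let sigiM f g : sigi (f * g) = sigi f * sigi g.
Proof. by apply: (can_inj sigK); rewrite sigM !sigiK. Qed.
Let sigiC c : sigi (cK c) = cK c.
Proof. by apply: (can_inj sigK); rewrite sigiK sigC. Qed.

Let hom_sigi : homK sigi.
Proof.
apply: (homK_build sigiD sigiM sigiC); exists (gam^-1 *: ('X - tau%:P)).
apply: (can_inj sigK); rewrite sigiK.
have e1 : toK (gam^-1 *: ('X - tau%:P)) = cK gam^-1 * (toK 'X - cK tau).
  by rewrite -mul_polyC toKM toKB.
have e2 : toK (gam *: 'X + tau%:P) = cK gam * toK 'X + cK tau.
  by rewrite -mul_polyC toKD toKM.
rewrite e1 sigM sigC sigD (homKN _ hom_sig) sigC sigX e2 addrK mulrA -cKM mulVr //.
by rewrite /cK polyC1 toK1 mul1r.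
Qed.

Let del1 : del 1 = 0.
Proof. exact: (del1 hO). Qed.

Lemma del_pol p : inRX (del (toK p)).
Proof.
elim/poly_ind: p => [|p c IH].
  by rewrite toK0 (del0 hO); exact: inRX0.
have dc : del (cK c) = 0 by rewrite -[cK c]mulr1 delC del1 mulr0.
rewrite toKD toKM delD delM delX dc addr0.
apply: inRXD; apply: inRXM => //; try exact: inRXtoK.
by have [q ->] := homK_pol p hom_sig; exact: inRXtoK.
Qed.

Lemma inRXop_D (Y : {poly K}) : inRXop Y -> inRXop (D Y).
Proof.
move=> H j; rewrite (coefDs hO); apply: inRXD.
  case: (j == 0%N); first exact: inRX0.
  by have [q ->] := H j.-1; have [q' ->] := homK_pol q hom_sig; exact: inRXtoK.
by have [q ->] := H j; exact: del_pol.
Qed.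

Lemma inRXop_iterD i (Y : {poly K}) : inRXop Y -> inRXop (iter i D Y).
Proof. by move=> H; elim: i => [|i IH] //; rewrite iterS; exact: inRXop_D. Qed.

Lemma inRXop_scale (x : K) (Y : {poly K}) : inRX x -> inRXop Y -> inRXop (x *: Y).
Proof. by move=> hx H j; rewrite coefZ; apply: inRXM. Qed.

Lemma iter_can n : cancel (iter n sig) (iter n sigi).
Proof.
elim: n => [//|n IH] x.
by rewrite [iter n.+1 sig x]iterS iterSr sigK IH.
Qed.

Lemma iter_canr n : cancel (iter n sigi) (iter n sig).
Proof.
elim: n => [//|n IH] x.
by rewrite [iter n.+1 sigi x]iterS iterSr sigiK IH.
Qed.

Lemma hom_sigpow r k : homK (sig_pow sig sigi r k).
Proof. by rewrite /sig_pow; case: (k <= r)%N; apply: homK_iter. Qed.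

Lemma sigpow_inv r k : exists psi, homK psi /\ cancel (sig_pow sig sigi r k) psi.
Proof.
rewrite /sig_pow; case: (k <= r)%N.
- by exists (iter (r - k) sigi); split; [exact: homK_iter | exact: iter_can].
- by exists (iter (k - r) sig); split; [exact: homK_iter | exact: iter_canr].
Qed.

Lemma prim_hom phi psi (g g' : {poly R}) : homK phi -> homK psi -> cancel phi psi ->
  phi (toK g) = toK g' -> primitive g -> primitive g'.
Proof.
move=> hphi hpsi can e pg c hc.
have [g'' eg] := dvdC_factor hc.
have [g3 e3] := homK_pol g'' hpsi.
have : toK g = toK (c%:P * g3).
  have [_ hM hC _] := hpsi.
  by rewrite -(can (toK g)) e eg toKM hM hC e3 toKM.
move/toK_inj => eg3; apply: pg => i; rewrite eg3 coefCM.
by exists g3`_i; rewrite mulrC.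
Qed.

Lemma lead_cont (Q : {poly K}) (P L : {poly {poly R}}) : Q != 0 -> L != 0 ->
  embed P = om Q (embed L) ->
  size P = (size Q + size L).-1 /\
  toK (lead_coef P) = lead_coef Q * iter (size Q).-1 sig (toK (lead_coef L)).
Proof.
move=> Q0 L0 e.
have L0' : embed L != 0 by rewrite embed_eq0.
have [s1 l1] := size_omul hO Q0 L0'.
by rewrite -size_embed e s1 size_embed -lead_embed e l1 lead_embed.
Qed.

Section Core.
Variables (L : {poly {poly R}}) (c : R) (m : nat) (p : 'I_m -> {poly R}) (e ks : 'I_m -> nat).
Hypothesis hlcL : lead_coef L = c%:P * \prod_(i < m) p i ^+ e i.
Hypothesis hp : forall i, (1 < size (p i))%N /\ irredRX (p i).
Hypothesis hnr : forall i dd, (ks i < dd)%N -> ~ removable sig sigi del L (p i ^+ dd).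

Lemma per_i (Q : {poly K}) (F N Dn : {poly R}) i :
  inRXop (om Q (embed L)) -> Q != 0 ->
  iter (size Q).-1 sigi (lead_coef (om Q (embed L))) = toK N / toK Dn * toK (lead_coef L) ->
  Dn != 0 -> F * Dn = N * lead_coef L -> dvdRX (p i ^+ (e i - ks i)) F.
Proof.
move=> hin Q0 hq Dn0 eF.
have [sp irr] := hp i.
have pp := irred_prime hPID sp irr.
have p0 : p i != 0 by rewrite -size_poly_gt0 (ltn_trans _ sp).
case: (eqVneq N 0) => [N0|N0].
  exists 0; rewrite mul0r; apply/eqP; move: eF; rewrite N0 mul0r => /eqP.
  by rewrite mulf_eq0 (negPf Dn0) orbF.
have [be [N' [eN nN]]] := val_exists sp N0.
have [al [D' [eD nD]]] := val_exists sp Dn0.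
have D'0 : D' != 0 by apply: contraNneq Dn0 => h; rewrite eD h mulr0.
set Y := c%:P * \prod_(j < m | j != i) p j ^+ e j.
have eL : lead_coef L = p i ^+ e i * Y by rewrite hlcL (bigD1 i) //= /Y mulrCA.
have pow0 : forall n, p i ^+ n != 0 by move=> n; exact: expf_neq0.
have dle : forall a b, (a <= b)%N -> dvdRX (p i ^+ a) (p i ^+ b).
  by move=> a b ab; exists (p i ^+ (b - a)); rewrite -exprD subnK.
case: (leqP al be) => hab.
- have : dvdRX (p i ^+ e i) (F * D').
    exists (p i ^+ (be - al) * N' * Y); apply: (mulfI (pow0 al)).
    have -> : p i ^+ al * (F * D') = F * Dn by rewrite eD; ring.
    rewrite eF eN eL -{1}(subnKC hab) exprD; ring.
  move/(prime_pow_dvd p0 pp nD) => h.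
  exact: dvdRX_trans (dle _ _ (leq_subr _ _)) h.
- set dd := (al - be)%N.
  have eal : p i ^+ al = p i ^+ be * p i ^+ dd by rewrite -exprD subnKC // ltnW.
  have eF2 : F * (p i ^+ dd * D') = N' * (p i ^+ e i * Y).
    apply: (mulfI (pow0 be)).
    have -> : p i ^+ be * (F * (p i ^+ dd * D')) = F * Dn by rewrite eD eal; ring.
    by rewrite eF eN eL; ring.
  case: (leqP dd (ks i)) => hdk.
  + case: (leqP dd (e i)) => hde.
    * have : dvdRX (p i ^+ (e i - dd)) (F * D').
        exists (N' * Y); apply: (mulfI (pow0 dd)).
        have -> : p i ^+ dd * (F * D') = F * (p i ^+ dd * D') by ring.
        rewrite eF2 -{1}(subnKC hde) exprD; ring.
      move/(prime_pow_dvd p0 pp nD) => h.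
      apply: dvdRX_trans h; apply: dle; lia.
    * rewrite (_ : (e i - ks i = 0)%N); last by lia.
      by exists F; rewrite expr0 mulr1.
  + exfalso; apply: (hnr hdk).
    exists (size Q).-1, Q; split; first by rewrite prednK // size_poly_gt0.
    exists N', D'; split; [exact: D'0 | exact: coprime_pow | exact: hin | ].
    * have kp : toK (p i) != 0 by rewrite toK_eq0.
      have kD : toK D' != 0 by rewrite toK_eq0.
      rewrite hq eN eD eal !toKM !toKX.
      exact: (frac_cancel (toK N') (toK D') (toK (lead_coef L)) be dd kp).
Qed.

Variables (T : {poly {poly R}}) (a a0 b : R) (g : {poly R}).
Hypothesis hL : (1 < size L)%N.
Hypothesis T0 : T != 0.
Hypothesis hlcT : lead_coef T = a%:P * g.
Hypothesis hg : primitive g.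
Hypothesis b0 : b != 0.
Hypothesis hrel : sig_pow sig sigi (size L).-1 (size T).-1 (toK (lead_coef T))
  = cK a0 / (cK b * toK (\prod_(i < m) p i ^+ ks i)) * toK (lead_coef L).
Hypothesis hcop : forall i j, i != j -> coprimeRX (p i) (p j).

Lemma lift_sigpow r k n x : (k <= n + r)%N ->
  iter n sig (sig_pow sig sigi r k x) = iter (n + r - k) sig x.
Proof.
move=> hk; rewrite /sig_pow; case: (leqP k r) => h.
- by rewrite -iterD; congr iter; lia.
- by rewrite {1}(_ : n = (n + r - k) + (k - r))%N ?iterD ?iter_canr //; lia.
Qed.

Lemma a_neq0 : a != 0.
Proof.
apply: contraNneq T0 => a0'; rewrite -lead_coef_eq0 hlcT a0'.
by rewrite polyC0 mul0r.
Qed.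

Lemma core_div (Q : {poly K}) (P : {poly {poly R}}) : Q != 0 ->
  embed P = om Q (embed L) -> (size T <= size P)%N ->
  exists H g', toK g' = iter (size P - size T) sig (toK g) /\ lead_coef P = H * g'.
Proof.
move=> Q0 eP sTP.
have L0 : L != 0 by rewrite -size_poly_gt0 (ltn_trans _ hL).
have [sP lP] := lead_cont Q0 L0 eP.
set nQ := (size Q).-1.
have hin : inRXop (om Q (embed L)) by rewrite -eP; exact: inRXop_embed.
have hisi := homK_iter nQ hom_sigi.
have [F hF] := homK_pol (lead_coef P) hisi.
have hq : iter nQ sigi (toK (lead_coef P)) = iter nQ sigi (lead_coef Q) * toK (lead_coef L).
  by have [_ hM _ _] := hisi; rewrite lP hM iter_can.
have [N [Dn [Dn0 eqN]]] := fracE (iter nQ sigi (lead_coef Q)).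
have hq2 : iter nQ sigi (lead_coef (om Q (embed L))) = toK N / toK Dn * toK (lead_coef L).
  by rewrite -eP lead_embed hq eqN.
have eF : F * Dn = N * lead_coef L.
  apply: toK_inj; rewrite !toKM -hF hq eqN.
  by apply: frac2; rewrite toK_eq0.
have hdiv := fun i => per_i i hin Q0 hq2 Dn0 eF.
have hPi : dvdRX (\prod_(i < m) p i ^+ (e i - ks i)) F.
  have hpr : forall i, primeRX (p i).
    by move=> i; have [h1 h2] := hp i; exact: (irred_prime hPID h1 h2).
  have hsz : forall i, (1 < size (p i))%N by move=> i; have [h1 h2] := hp i.
  exact: (dvd_prod_pows hpr hsz hcop hdiv).
have hsp := hom_sigpow (size L).-1 (size T).-1.
have [Gr hGr] := homK_pol g hsp.
have [psi [hpsi cpsi]] := sigpow_inv (size L).-1 (size T).-1.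
have pGr := prim_hom hsp hpsi cpsi hGr hg.
have g0 : g != 0 by apply: contraNneq T0 => g0; rewrite -lead_coef_eq0 hlcT g0 mulr0.
have Gr0 : Gr != 0.
  apply: contraNneq g0 => G0; apply/eqP; apply: toK_inj.
  by rewrite -(cpsi (toK g)) hGr G0 toK0 (homK0 hpsi).
have hrel2 : cK a * toK Gr = cK a0 / (cK b * toK (\prod_(i < m) p i ^+ ks i)) * toK (lead_coef L).
  by rewrite -hrel hlcT toKM; have [_ hM hC _] := hsp; rewrite hM hC hGr.
set Mn := \prod_(i < m) p i ^+ minn (ks i) (e i).
set X1 := \prod_(i < m) p i ^+ (ks i - minn (ks i) (e i)).
set Pi := \prod_(i < m) p i ^+ (e i - ks i).
have eK : \prod_(i < m) p i ^+ ks i = Mn * X1.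
  rewrite /Mn /X1 -big_split /=; apply: eq_bigr => i _; rewrite -exprD; congr (_ ^+ _); lia.
have eE : \prod_(i < m) p i ^+ e i = Mn * Pi.
  rewrite /Mn /Pi -big_split /=; apply: eq_bigr => i _; rewrite -exprD; congr (_ ^+ _); lia.
have pne : forall i, p i != 0.
  by move=> i; have [h1 _] := hp i; rewrite -size_poly_gt0 (ltn_trans _ h1).
have Mn0 : Mn != 0 by apply/prodf_neq0 => i _; exact: expf_neq0.
have X10 : X1 != 0 by apply/prodf_neq0 => i _; exact: expf_neq0.
have eqR : a%:P * Gr * (b%:P * \prod_(i < m) p i ^+ ks i) = a0%:P * lead_coef L.
  apply: toK_inj; rewrite !toKM; apply: frac3 hrel2.
  apply: mulf_neq0; first by rewrite /cK toK_eq0 polyC_eq0.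
  by rewrite toK_eq0 eK; exact: mulf_neq0.
have eqR2 : (a0 * c)%:P * Pi = (a%:P * b%:P * X1) * Gr.
  apply: (mulfI Mn0); move: eqR; rewrite eK hlcL eE polyCM => eqR.
  have -> : Mn * ((a0%:P * c%:P) * Pi) = a0%:P * (c%:P * (Mn * Pi)) by ring.
  by rewrite -eqR; ring.
have l0 : a0 * c != 0.
  apply/negP => /eqP l0; move: eqR2; rewrite l0 polyC0 mul0r => /esym /eqP.
  rewrite !mulf_eq0 !polyC_eq0 (negPf a_neq0) (negPf b0) (negPf X10) (negPf Gr0) //.
have [h eh] := hPi.
have [H eH] : dvdRX Gr F.
  apply: (gauss hPID pGr l0 (h := h * (a%:P * b%:P * X1))).
  rewrite eh; have -> : (a0 * c)%:P * (h * Pi) = h * ((a0 * c)%:P * Pi) by ring.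
  by rewrite eqR2; ring.
have hs := homK_iter nQ hom_sig.
have [H' hH'] := homK_pol H hs.
have [g' hg'] := homK_pol g (homK_iter (size P - size T) hom_sig).
exists H', g'; split => //.
apply: toK_inj; rewrite toKM -hH' -hg'.
have sT : (0 < size T)%N by rewrite size_poly_gt0.
have sQ : (0 < size Q)%N by rewrite size_poly_gt0.
have -> : (size P - size T = nQ + (size L).-1 - (size T).-1)%N by rewrite sP /nQ; lia.
rewrite -lift_sigpow; last by rewrite /nQ; lia.
have [_ hM _ _] := hs.
by rewrite hGr -hM -toKM -eH -hF iter_canr.
Qed.

Variable k : nat.
Hypothesis cT : cont sig del L T.
Hypothesis sTk : (size T <= k.+1)%N.

Lemma main_dir : forall P, cont sig del L P -> colon (lideal sig del (Mk sig del L k)) a P.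
Proof.
have base : forall P1 : {poly {poly R}}, cont sig del L P1 -> (size P1 <= k.+1)%N ->
    colon (lideal sig del (Mk sig del L k)) a P1.
  move=> P1 cP sP; exists 0%N; rewrite expr0 polyC1 scale1r.
  apply: (lideal_single (A := 1) (B := P1)); first by split.
  by rewrite embed1 omul1.
suff H : forall s (P : {poly {poly R}}), (size P <= s)%N -> cont sig del L P ->
    colon (lideal sig del (Mk sig del L k)) a P.
  by move=> P cP; apply: (H (size P)).
elim=> [|s IH] P sP cP.
  by apply: base => //; lia.
case: (leqP (size P) k.+1) => hPk; first exact: base.
have P0 : P != 0 by rewrite -size_poly_gt0; lia.
case: cP => Q eQ.
have Q0 : Q != 0.
  by apply: contraNneq P0 => Q0; rewrite -embed_eq0 eQ Q0 omul0; exact: eqxx.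
have sTP : (size T <= size P)%N by lia.
have [H [g' [hg' eH]]] := core_div Q0 eQ sTP.
set j := (size P - size T)%N.
have eT0 : embed T != 0 by rewrite embed_eq0.
have [h0 hs hl] := size_iterD hO j eT0.
set Y := toK H *: iter j D (embed T).
have hY : inRXop Y := inRXop_scale (inRXtoK H) (inRXop_iterD j (inRXop_embed T)).
have [W eW] := unembed hY.
have eY : Y = om (embed (H%:P * 'X^j)) (embed T) by rewrite embed_CXn omulZ omulXn.
have [QT eQT] := cT.
set P' := a%:P *: P - W.
have eP' : embed P' = om (cK a *: Q - toK H *: om 'X^j QT) (embed L).
  by rewrite /P' embedB embedZ eW /Y eQ eQT -omulXn (omulA hO) omulB !omulZ.
have sPj : size (iter j D (embed T)) = size P.
  by rewrite hs size_embed /j; lia.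
have sP' : (size P' <= (size P).-1)%N.
  rewrite -(size_embed P'); apply/leq_sizeP => i hi.
  rewrite /P' embedB embedZ eW coefB coefZ coef_embed /Y coefZ.
  case: (eqVneq i (size P).-1) => [->|ne].
  - have e1 : P`_(size P).-1 = lead_coef P by rewrite lead_coefE.
    have e2 : (iter j D (embed T))`_(size P).-1 = cK a * toK g'.
      rewrite -sPj -lead_coefE hl lead_embed hlcT toKM hg'.
      by have [_ hM hC _] := homK_iter j hom_sig; rewrite hM hC.
    rewrite e1 e2 eH toKM mulrCA; exact: subrr.
  - have hi2 : (size P <= i)%N by move: hi ne; case: (size P) => [|sp] //= h1 h2; lia.
    rewrite (nth_default _ hi2) (nth_default _ (_ : size (iter j D (embed T)) <= i)%N); last by rewrite sPj.
    by rewrite toK0 !mulr0 subrr.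
have := IH P' (leq_trans sP' _) _.
case; first by lia.
  by exists (cK a *: Q - toK H *: om 'X^j QT).
move=> i hi; exists i.+1.
have -> : (a ^+ i.+1)%:P *: P = (a ^+ i)%:P *: P' + (a ^+ i)%:P *: W.
  by rewrite /P' -scalerDr subrK scalerA -polyCM -exprSr.
apply: lideal_add => //; apply: lideal_scale.
apply: (lideal_single (A := H%:P * 'X^j) (B := T)); first by split.
by rewrite eW eY.
Qed.

End Core.

Lemma sum_cont L n (A B : 'I_n -> {poly {poly R}}) : (forall i, cont sig del L (B i)) ->
  exists X, \sum_(i < n) om (embed (A i)) (embed (B i)) = om X (embed L).
Proof.
elim: n A B => [|n IH] A B hB; first by exists 0; rewrite big_ord0 omul0.
have [X eX] := IH (fun i => A (widen_ord (leqnSn n) i)) (fun i => B (widen_ord (leqnSn n) i))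
  (fun i => hB _).
have [Qn eQn] := hB ord_max.
exists (X + om (embed (A ord_max)) Qn).
by rewrite big_ord_recr /= eX eQn (omulA hO) omulD.
Qed.

Lemma colon_to_cont L k a P : a != 0 ->
  colon (lideal sig del (Mk sig del L k)) a P -> cont sig del L P.
Proof.
move=> a0 [i [n [A [B [hB e]]]]].
have [X eX] := sum_cont A (fun j => proj1 (hB j)).
rewrite eX embedZ in e.
have z0 : toK (a ^+ i)%:P != 0 by rewrite toK_eq0 polyC_eq0 expf_neq0.
exists ((toK (a ^+ i)%:P)^-1 *: X).
by rewrite omulZ -e scalerA mulVf // scale1r.
Qed.

End Main.

Unset Implicit Arguments.

Theorem mainTheorem1 (R : idomainType) (hPID : PID R)
  (gam tau : R) (d : {poly R}) (sig sigi del : QRx R -> QRx R)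
  (hore : ore_data gam tau d sig sigi del)
  (L T : {poly {poly R}}) (hL : (1 < size L)%N)
  (hT : desingularized sig sigi del L T)
  (a : R) (g : {poly R}) (hlc : lead_coef T = a%:P * g) (hg : primitive g)
  (k : nat) (hk : Mk sig del L k T) :
  forall P : {poly {poly R}},
    cont sig del L P <-> colon (lideal sig del (Mk sig del L k)) a P.
Proof.
move=> P.
have [T0 cT [c [m [p [e [hlcL hp he hcop [a0 [b [ks [b0 hrel hnr]]]]]]]]]] := hT.
have [_ sTk] := hk.
split.
- exact: (main_dir hPID hore hlcL hp hnr hL T0 hlc hg b0 hrel hcop cT sTk).
- exact: (colon_to_cont hore (a_neq0 T0 hlc)).
Qed.
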